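(* For each $n$, let $Y_n$ and $\tilde Y_n$ be random variables taking values in the same countable set $\mathcal Y_n$. If $\lim_{n\to\infty}d(P_{Y_n},P_{\tilde Y_n})=0$, then $$\lim_{n\to\infty}L\Big(\log\tfrac{1}{P_{Y_n}(Y_n)},\ \log\tfrac{1}{P_{\tilde Y_n}(\tilde Y_n)}\Big)=0 .$$
   Context: Logarithms are natural. The variational distance is $d(P,Q)=\sum_a|P(a)-Q(a)|$. For real-valued random variables $U,V$, the Lévy distance is $$L(U,V)=\inf\{m>0:\ \forall x\in\mathbb R,\ \Pr\{U\le x-m\}-m\le\Pr\{V\le x\}\le \Pr\{U\le x+m\}+m\}.$$ *)

(* Defs.v *)
From Stdlib Require Import Reals Lra ClassicalEpsilon.
Open Scope R_scope.

(* A probability mass function on a countable set, the set being encoded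
   (via an injection) as a subset of nat; points outside the image get mass 0. *)
Definition pmf (P : nat -> R) : Prop :=
  (forall y, 0 <= P y) /\ infinite_sum P 1.

Definition series_val (f : nat -> R) : R :=
  epsilon (inhabits 0) (fun l => infinite_sum f l).

Definition vardist (P Q : nat -> R) : R :=
  series_val (fun y => Rabs (P y - Q y)).

(* Pr{ log (1 / P(Y)) <= x } where Y ~ P *)
Definition prob_info_le (P : nat -> R) (x : R) : R :=
  series_val (fun y => if Rle_dec (ln (/ P y)) x then P y else 0).

Definition is_inf (S : R -> Prop) (l : R) : Prop :=
  (forall m, S m -> l <= m) /\ (forall b, (forall m, S m -> b <= m) -> b <= l).

(* Levy distance between log(1/P(Y)) (Y ~ P) and log(1/Q(Ytilde)) (Ytilde ~ Q) *)
Definition levy_set (P Q : nat -> R) (m : R) : Prop :=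
  0 < m /\
  forall x : R,
    prob_info_le P (x - m) - m <= prob_info_le Q x /\
    prob_info_le Q x <= prob_info_le P (x + m) + m.

Definition levy_info (P Q : nat -> R) : R :=
  epsilon (inhabits 0) (fun l => is_inf (levy_set P Q) l).

(* Main.v *)
Require Import Defs.
From Stdlib Require Import Reals Lra ClassicalEpsilon.
Open Scope R_scope.

Lemma sv_eq f l : infinite_sum f l -> series_val f = l.
Proof.
  intros H. unfold series_val. apply (uniqueness_sum f).
  - apply epsilon_spec. exists l; exact H.
  - exact H.
Qed.

Lemma sum_ex_comp (a b : nat -> R) lb :
  (forall n, 0 <= a n <= b n) -> infinite_sum b lb -> exists la, infinite_sum a la.
Proof.
  intros H Hb. destruct (Rseries_CV_comp a b H (exist _ lb Hb)) as [la Hla].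
  exists la. exact Hla.
Qed.

Definition ind (P : nat -> R) x y := if Rle_dec (ln (/ P y)) x then P y else 0.

Lemma ind_bounds P x y : 0 <= P y -> 0 <= ind P x y <= P y.
Proof. intros; unfold ind; destruct Rle_dec; lra. Qed.

Lemma ind_sum P x : pmf P -> infinite_sum (ind P x) (prob_info_le P x).
Proof.
  intros [Hp H1]. destruct (sum_ex_comp (ind P x) P 1) as [l Hl]; auto.
  intro n; apply ind_bounds; auto.
  unfold prob_info_le. fold (ind P x). rewrite (sv_eq _ l Hl). exact Hl.
Qed.

Lemma prob_bounds P x : pmf P -> 0 <= prob_info_le P x <= 1.
Proof.
  intros HP. pose proof (ind_sum P x HP) as Hs. destruct HP as [Hp H1]. split.
  - apply (@Rle_cv_lim (fun _ : nat => 0%R) (sum_f_R0 (ind P x))).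
    + intro n; apply cond_pos_sum; intro k; apply ind_bounds; auto.
    + intros e He; exists O; intros; unfold Rdist; rewrite Rminus_diag, Rabs_R0; lra.
    + exact Hs.
  - apply (@Rle_cv_lim (sum_f_R0 (ind P x)) (sum_f_R0 P)); auto.
    intro n; apply sum_Rle; intros; apply ind_bounds; auto.
Qed.

Lemma point P Q m x y : 0 < m -> 0 <= P y -> 0 <= Q y ->
  ind Q x y <= ind P (x+m) y + ((1+m)/m) * Rabs (P y - Q y).
Proof.
  intros Hm HP HQ.
  assert (Hc : 1 <= (1+m)/m).
  { apply (Rmult_le_reg_r m); auto. unfold Rdiv; rewrite Rmult_assoc, Rinv_l; lra. }
  assert (Hc0 : 0 <= Rabs (P y - Q y)) by apply Rabs_pos.
  pose proof (ind_bounds P (x+m) y HP).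
  unfold ind at 1. destruct (Rle_dec (ln (/ Q y)) x) as [Hq|Hq].
  2:{ nra. }
  destruct (Req_dec (Q y) 0) as [Q0|Q0]. { nra. }
  destruct (Req_dec (P y) 0) as [P0|P0].
  { rewrite P0, Rminus_0_l, Rabs_Ropp, Rabs_right by lra. nra. }
  unfold ind. destruct (Rle_dec (ln (/ P y)) (x+m)) as [Hp|Hp].
  { assert (Q y <= P y + Rabs (P y - Q y)).
    { pose proof (Rle_abs (Q y - P y)). rewrite Rabs_minus_sym in H0. lra. }
    nra. }
  rewrite ln_Rinv in Hq, Hp by lra.
  assert (Hl : ln (P y * exp m) < ln (Q y)).
  { rewrite ln_mult, ln_exp by (try apply exp_pos; lra). lra. }
  apply ln_lt_inv in Hl; [|pose proof (exp_pos m); nra|lra].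
  pose proof (exp_ineq1 m ltac:(lra)).
  assert (Q y - P y > P y * m) by nra.
  rewrite Rabs_minus_sym, Rabs_right by nra.
  assert (m * Q y <= (1+m) * (Q y - P y)) by nra.
  assert (Q y <= (1+m)/m * (Q y - P y)).
  { apply (Rmult_le_reg_l m); auto. unfold Rdiv.
    replace (m * ((1 + m) * / m * (Q y - P y))) with ((1+m)*(Q y - P y) * (m * / m)) by ring.
    rewrite Rinv_r; lra. }
  lra.
Qed.

Lemma core P Q m x D V : pmf P -> pmf Q -> 0 < m ->
  (forall y, Rabs (P y - Q y) <= D y) -> infinite_sum D V ->
  prob_info_le Q x <= prob_info_le P (x+m) + ((1+m)/m) * V.
Proof.
  intros HP HQ Hm HD HV.
  pose proof (ind_sum Q x HQ) as SQ. pose proof (ind_sum P (x+m) HP) as SP.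
  apply (@Rle_cv_lim (sum_f_R0 (ind Q x))
    (fun n => sum_f_R0 (ind P (x+m)) n + sum_f_R0 D n * ((1+m)/m))); auto.
  - intro n. rewrite (Rmult_comm (sum_f_R0 D n)), scal_sum.
    rewrite <- plus_sum. apply sum_Rle. intros k _.
    assert (Hc : 0 <= (1+m)/m) by (apply Rlt_le, Rdiv_lt_0_compat; lra).
    pose proof (point P Q m x k Hm (proj1 HP k) (proj1 HQ k)). specialize (HD k). nra.
  - rewrite (Rmult_comm _ V). apply CV_plus; auto. apply CV_mult; auto.
    intros e He; exists O; intros; unfold Rdist; rewrite Rminus_diag, Rabs_R0; lra.
Qed.

Lemma in_levy P Q m V : pmf P -> pmf Q -> 0 < m ->
  infinite_sum (fun y => Rabs (P y - Q y)) V -> ((1+m)/m) * V <= m ->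
  levy_set P Q m.
Proof.
  intros HP HQ Hm HV HVm. split; auto. intro x. split.
  - pose proof (core Q P m (x-m) (fun y => Rabs (P y - Q y)) V HQ HP Hm) as H.
    replace (x - m + m) with x in H by ring.
    assert (prob_info_le P (x - m) <= prob_info_le Q x + (1 + m) / m * V).
    { apply H; auto. intro y; rewrite Rabs_minus_sym; lra. }
    lra.
  - pose proof (core P Q m x (fun y => Rabs (P y - Q y)) V HP HQ Hm (fun y => Rle_refl _) HV). lra.
Qed.

Lemma levy_bound P Q m : levy_set P Q m -> 0 <= levy_info P Q <= m.
Proof.
  intros Hm.
  assert (Ex : exists l, is_inf (levy_set P Q) l).
  { destruct (completeness (fun z => levy_set P Q (- z))) as [l [Hu Hl]].
    - exists 0. intros z [Hz _]. lra.
    - exists (-m). rewrite Ropp_involutive. exact Hm.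
    - exists (-l). split.
      + intros k Hk. assert (-k <= l) by (apply Hu; rewrite Ropp_involutive; auto). lra.
      + intros b Hb. assert (l <= -b).
        { apply Hl. intros z Hz. specialize (Hb _ Hz). lra. }
        lra. }
  pose proof (epsilon_spec (inhabits 0) _ Ex) as [H1 H2].
  fold (levy_info P Q) in H1, H2. split.
  - apply H2. intros k [Hk _]; lra.
  - apply H1; auto.
Qed.

Theorem lemma4 (P Q : nat -> nat -> R)
  (hP : forall n, pmf (P n)) (hQ : forall n, pmf (Q n))
  (hd : Un_cv (fun n => vardist (P n) (Q n)) 0) :
  Un_cv (fun n => levy_info (P n) (Q n)) 0.
Proof.
  intros e He.
  set (m := Rmin e 1 / 2).
  assert (Hm : 0 < m) by (unfold m; apply Rmin_case; lra).
  assert (Hme : m < e) by (unfold m; apply Rmin_case_strong; intros; lra).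
  assert (Hd0 : 0 < m * m / (1 + m)) by (apply Rdiv_lt_0_compat; nra).
  destruct (hd _ Hd0) as [N HN]. exists N. intros n Hn.
  specialize (HN n Hn). unfold Rdist in HN |- *. rewrite Rminus_0_r in HN |- *.
  assert (HV : infinite_sum (fun y => Rabs (P n y - Q n y)) (vardist (P n) (Q n))).
  { destruct (sum_ex_comp (fun y => Rabs (P n y - Q n y)) (fun y => P n y + Q n y) 2)
      as [l Hl].
    - intro y. destruct (hP n) as [Hp _]; destruct (hQ n) as [Hq _].
      specialize (Hp y); specialize (Hq y). split; [apply Rabs_pos|].
      apply Rabs_le; lra.
    - replace 2 with (1+1) by ring. intros ee Hee.
      destruct (hP n) as [_ H1]; destruct (hQ n) as [_ H2].
      destruct (CV_plus _ _ 1 1 H1 H2 ee Hee) as [N0 HN0]. exists N0.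
      intros k Hk. rewrite plus_sum. apply HN0; auto.
    - unfold vardist. rewrite (sv_eq _ l Hl). exact Hl. }
  assert (Hle : (1+m)/m * vardist (P n) (Q n) <= m).
  { pose proof (Rle_abs (vardist (P n) (Q n))).
    assert (vardist (P n) (Q n) * (1+m) < m * m).
    { apply (Rmult_lt_reg_r (/ (1+m))). apply Rinv_0_lt_compat; lra.
      rewrite Rmult_assoc, Rinv_r by lra. unfold Rdiv in Hd0, HN. lra. }
    apply (Rmult_le_reg_l m); auto. unfold Rdiv.
    replace (m * ((1 + m) * / m * vardist (P n) (Q n)))
      with ((vardist (P n) (Q n) * (1 + m)) * (m * / m)) by ring.
    rewrite Rinv_r; nra. }
  pose proof (levy_bound _ _ _ (in_levy _ _ m _ (hP n) (hQ n) Hm HV Hle)).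
  rewrite Rabs_right by lra. lra.
Qed.
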